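(* Consider the following hybrid sealed-bid auction for a single item. There are $n_A$ ''integrated'' bidders, each with a private value drawn independently from the uniform distribution on $[0,1]$, and a single ''non-integrated'' bidder with private value $v \in [0,1]$, independent of the others. All bidders simultaneously submit bids and the highest bidder wins. If the winner is integrated, it pays the second-highest bid; if the winner is the non-integrated bidder, it pays its own bid. Suppose every integrated bidder bids its true value. Then in equilibrium the non-integrated bidder with value $v$ bids $\frac{n_A}{n_A+1} v$, and its equilibrium interim expected surplus is $$S(v) = \left(\frac{n_A}{n_A+1}\right)^{n_A} \frac{v^{n_A+1}}{n_A+1},$$ whereas if this bidder were also integrated (i.e. paid the second-highest bid upon winning and bid truthfully) its interim expected surplus would be $$S(v) = \frac{v^{n_A+1}}{n_A+1}.$$ In particular, being the sole non-integrated bidder costs it a fraction $\left(\frac{n_A}{n_A+1}\right)^{n_A}$ of its surplus relative to being integrated.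
   Context: Bidders are risk neutral with quasilinear utility (value minus payment if winning, zero otherwise). Interim expected surplus means the expected utility of the bidder conditional on its own value $v$. *)

(* Defs.v *)
From HB Require Import structures.
From mathcomp Require Import all_boot all_order all_algebra.
From mathcomp Require Import all_classical all_reals all_analysis.
Set Implicit Arguments.
Unset Strict Implicit.
Unset Printing Implicit Defensive.
Import Order.TTheory GRing.Theory Num.Theory.
Import numFieldNormedType.Exports.
Local Open Scope classical_set_scope.
Local Open Scope ring_scope.

Section Auction.
Variable R : realType.

(* Expectation of f(X_1,...,X_n) where X_1,...,X_n are i.i.d. uniform on
   [0,1], written as the iterated Lebesgue integral over [0,1]^n. *)
Fixpoint unifE (n : nat) (f : seq R -> R) : R :=
  match n with
  | 0 => f [::]
  | n'.+1 => Rintegral lebesgue_measure `[0%R, 1%R]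
               (fun x => unifE n' (fun s => f (x :: s)))
  end.

Definition maxbid (s : seq R) : R := \big[Num.max/0]_(x <- s) x.

(* Realized utility of the non-integrated bidder with value v bidding b,
   given the integrated bidders' (truthful) bids s: wins iff it is the
   highest bidder (ties, a null event, resolved in its favor), then pays
   its own bid. *)
Definition nonint_utility (v b : R) (s : seq R) : R :=
  if maxbid s <= b then v - b else 0.

(* Realized utility of the same bidder if it were integrated: bids its
   value v truthfully and, when winning, pays the second-highest bid,
   i.e. the highest competing bid. *)
Definition int_utility (v : R) (s : seq R) : R :=
  if maxbid s <= v then v - maxbid s else 0.

Definition U_nonint (nA : nat) (v b : R) : R := unifE nA (nonint_utility v b).
Definition S_int (nA : nat) (v : R) : R := unifE nA (int_utility v).

End Auction.

(* Main.v *)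
Require Import Defs.
From HB Require Import structures.
From mathcomp Require Import all_boot all_order all_algebra.
From mathcomp Require Import all_classical all_reals all_analysis.
From mathcomp Require Import ring lra.
Import Order.TTheory GRing.Theory Num.Theory.
Local Open Scope ring_scope.

Section Helpers.
Import numFieldNormedType.Exports.
Local Open Scope classical_set_scope.
Variable R : realType.
Notation mu := (@lebesgue_measure R).

Lemma unifE_ext n (f g : seq R -> R) : (forall s, f s = g s) -> unifE n f = unifE n g.
Proof. by move=> fg; have -> : f = g by apply: funext. Qed.

Lemma Rint_cst_itv (lo hi c : R) : lo <= hi ->
  \int[mu]_(x in `[lo, hi]) c = c * (hi - lo).
Proof.
move=> lh; rewrite Rintegral_cst //= lebesgue_measure_itv /=.
rewrite lte_fin; case: ltP => [//|hl] /=.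
have -> : hi = lo by apply/eqP; rewrite eq_le hl lh.
by rewrite subrr mulr0.
Qed.

Lemma unifE_cst n (c : R) : unifE n (fun _ => c) = c.
Proof.
elim: n => [//|n IH] /=; rewrite IH Rint_cst_itv ?ler01 //; lra.
Qed.

Lemma maxbid_cons (x : R) s : maxbid (x :: s) = Num.max x (maxbid s).
Proof. by rewrite /maxbid big_cons. Qed.

Lemma maxbid_ge0 (s : seq R) : 0 <= maxbid s.
Proof. elim: s => [|x s IH]; first by rewrite /maxbid big_nil.
by rewrite maxbid_cons le_max IH orbT. Qed.

Lemma Rint_restrict (D E : set R) (f g : R -> R) :
  (forall x, (f \_ D) x = (g \_ E) x) ->
  \int[mu]_(x in D) f x = \int[mu]_(x in E) g x.
Proof.
move=> H; rewrite [LHS]Rintegral_mkcond [RHS]Rintegral_mkcond.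
by congr Rintegral; apply: funext => x; exact: H.
Qed.

Lemma I1 (b K : R) : \int[mu]_(x in `[0, 1]) (if x <= b then K else 0)
  = if 0 <= b then K * Num.min b 1 else 0.
Proof.
have [b0|b0] := ltP b 0.
  rewrite (@eq_Rintegral _ _ _ _ _ (fun _ => 0)); last first.
    move=> x; rewrite inE /= in_itv /= => /andP[x0 _].
    by rewrite leNgt (lt_le_trans b0 x0).
  by rewrite Rint_cst_itv ?ler01 // mul0r.
have [b1|b1] := leP 1 b.
  rewrite (@eq_Rintegral _ _ _ _ _ (fun _ => K)); last first.
    move=> x; rewrite inE /= in_itv /= => /andP[_ x1].
    by rewrite (le_trans x1 b1).
  by rewrite Rint_cst_itv ?ler01 // subr0.
transitivity (\int[mu]_(x in `[0, b]) K); last first.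
  by rewrite Rint_cst_itv // subr0.
apply: Rint_restrict => x.
rewrite /patch /= !mem_setE /= !in_itv /=.
have [x0|x0] := leP 0 x => //=.
have [xb|xb] := leP x b.
  by rewrite (le_trans xb (ltW b1)).
by case: ifP.
Qed.

Lemma F1 n (b c : R) : unifE n (fun s => if maxbid s <= b then c else 0)
  = if 0 <= b then c * (Num.min b 1) ^+ n else 0.
Proof.
elim: n => [|n IH] /=.
  by rewrite /maxbid big_nil expr0 mulr1.
transitivity (\int[mu]_(x in `[0, 1]) (if x <= b then
   (if 0 <= b then c * (Num.min b 1) ^+ n else 0) else 0)); last first.
  rewrite I1; case: ifP => // b0; rewrite b0 exprS; ring.
apply: eq_Rintegral => x _.
  rewrite (@unifE_ext _ _ (fun s => if x <= b then (if maxbid s <= b then c else 0) else 0)).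
    by case: ifP => _; [exact: IH | exact: unifE_cst].
by move=> s; rewrite maxbid_cons ge_max; case: (x <= b).
Qed.

Lemma FTC_poly (p : {poly R}) (lo hi : R) : lo <= hi ->
  \int[mu]_(x in `[lo, hi]) (p^`()).[x] = p.[hi] - p.[lo].
Proof.
rewrite le_eqVlt => /predU1P[<-|lh].
  by rewrite set_itv1 Rintegral_set1 subrr.
rewrite /Rintegral (@continuous_FTC2 _ _ (horner p)) //=.
- apply: continuous_subspaceT; exact: continuous_horner.
- split.
  + by move=> x _; exact: derivable_horner.
  + apply: cvg_at_right_filter; exact: continuous_horner.
  + apply: cvg_at_left_filter; exact: continuous_horner.
- by move=> x _; rewrite -derivE.
Qed.

Definition Pp n (v : R) : {poly R} :=
  (v ^+ n.+1 / n.+1%:R)%:P - (n.+1%:R)^-1 *: 'X^(n.+1).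
Definition Qp n (v : R) : {poly R} :=
  (v ^+ n.+1 / n.+1%:R) *: 'X - (n.+1%:R * n.+2%:R)^-1 *: 'X^(n.+2).

Lemma PpE n v x : (Pp n v).[x] = (v ^+ n.+1 - x ^+ n.+1) / n.+1%:R.
Proof. rewrite /Pp !hornerE; field. by apply/eqP => h; have := ler0n R n; lra. Qed.

Lemma QpE n v x : (Qp n v).[x] =
  (v ^+ n.+1 * x - x ^+ n.+2 / n.+2%:R) / n.+1%:R.
Proof. rewrite /Qp !(hornerD, hornerN, hornerZ, hornerC, hornerXn, hornerX); field.
by apply/andP; split; apply/eqP => h; have := ler0n R n; lra.
Qed.

Lemma dQpE n v x : ((Qp n v)^`()).[x] = (Pp n v).[x].
Proof.
rewrite /Qp derivB !derivZ derivX derivXn PpE hornerD hornerN !hornerZ hornerMn hornerXn hornerC.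
rewrite -[x ^+ _ *+ _]mulr_natr /=.
field.
by apply/andP; split; apply/eqP => h; have := ler0n R n; lra.
Qed.

Lemma cont_f n (v a : R) : continuous (fun x : R => (Pp n v).[Num.max a x]).
Proof.
move=> x; apply: continuous_comp; last exact: continuous_horner.
apply: (@max_fun_continuous _ _ _ (cst a) id); [exact: cst_continuous | exact: (fun _ => cvg_id)].
Qed.

Definition Hf n (v t : R) := if t <= v then (v ^+ n.+1 - t ^+ n.+1) / n.+1%:R else 0.

Lemma I2 n (a v : R) : 0 <= a <= 1 -> 0 <= v <= 1 ->
  \int[mu]_(x in `[0, 1]) Hf n v (Num.max a x)
  = if a <= v then (v ^+ n.+2 - a ^+ n.+2) / n.+2%:R else 0.
Proof.
move=> /andP[a0 a1] /andP[v0 v1].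
have [va|av] := ltP v a.
  transitivity (\int[mu]_(x in `[0, 1]) (0:R)).
    apply: eq_Rintegral => x _; rewrite /Hf.
    have h : a <= Num.max a x by rewrite le_max lexx.
    by rewrite leNgt (lt_le_trans va h).
  by rewrite Rint_cst_itv ?ler01 // mul0r.
pose f x := (Pp n v).[Num.max a x].
transitivity (\int[mu]_(x in `[0, v]) f x).
  apply: Rint_restrict => x.
  rewrite /patch /= !mem_setE /= !in_itv /= /f /Hf PpE.
  have [x0|x0] := leP 0 x => //=.
  have [xv|xv] := leP x v.
    by rewrite (le_trans xv v1) ge_max av xv.
  by case: ifP => // _; rewrite ge_max [x <= v]leNgt xv andbF.
have intf : mu.-integrable `[0, v] (EFin \o f).
  apply: continuous_compact_integrable; first exact: segment_compact.
  by apply: continuous_subspaceT; exact: cont_f.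
have := Rintegral_itvB intf (x := a).
rewrite !bnd_simp => /(_ a0 av) /eqP; rewrite subr_eq => /eqP ->.
have -> : \int[mu]_(t in `[0, a]) f t = (Pp n v).[a] * a.
  transitivity (\int[mu]_(t in `[0, a]) (Pp n v).[a]); last first.
    by rewrite Rint_cst_itv // subr0.
  apply: eq_Rintegral => x; rewrite inE /= in_itv /= => /andP[_ xa].
  by rewrite /f max_l.
have -> : \int[mu]_(t in `]a, v]) f t = \int[mu]_(t in `[a, v]) ((Qp n v)^`()).[t].
  transitivity (\int[mu]_(t in `]a, v]) (Pp n v).[t]).
    apply: eq_Rintegral => x; rewrite inE /= in_itv /= => /andP[ax _].
    by rewrite /f max_r // ltW.
  rewrite Rintegral_itv_obnd_cbnd.
    by apply: eq_Rintegral => x _; rewrite dQpE.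
  have hi : mu.-integrable `[a, v] (EFin \o horner (Pp n v)).
    apply: continuous_compact_integrable; first exact: segment_compact.
    by apply: continuous_subspaceT; exact: continuous_horner.
  apply: integrableS hi => //.
  by apply: subset_itv; rewrite bnd_simp.
rewrite FTC_poly // !QpE PpE.
rewrite !exprS; field.
by apply/andP; split; apply/eqP => h; have := ler0n R n; lra.
Qed.

Lemma F2 n (v : R) : 0 <= v <= 1 -> forall a, 0 <= a <= 1 ->
  unifE n (fun s => int_utility v (a :: s)) = Hf n v a.
Proof.
move=> hv; elim: n => [|n IH] a /andP[a0 a1] /=.
  rewrite /int_utility /Hf maxbid_cons /maxbid big_nil max_l //.
  by rewrite !expr1 divr1.
transitivity (\int[mu]_(x in `[0, 1]) Hf n v (Num.max a x)).
  apply: eq_Rintegral => x; rewrite inE /= in_itv /= => /andP[x0 x1].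
  rewrite (@unifE_ext _ _ (fun s => int_utility v (Num.max a x :: s))).
    apply: IH; rewrite ge_max a1 x1 le_max a0 /=.
    by [].
  by move=> s; rewrite /int_utility !maxbid_cons maxA.
by rewrite I2 ?a0 ?a1.
Qed.

Lemma Kpos n (b c : R) : 0 <= b -> 0 <= c ->
  0 <= c ^+ n.+1 - n.+1%:R * c * b ^+ n + n%:R * b ^+ n.+1.
Proof.
move=> b0 c0; elim: n => [|n IH].
  by rewrite expr1 expr0 mul1r mulr1 subrr mul0r addr0.
have -> : c ^+ n.+2 - n.+2%:R * c * b ^+ n.+1 + n.+1%:R * b ^+ n.+2 =
  c * (c ^+ n.+1 - n.+1%:R * c * b ^+ n + n%:R * b ^+ n.+1)
  + n.+1%:R * b ^+ n * (b - c) ^+ 2.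
  rewrite !exprS; ring.
apply: addr_ge0; first exact: mulr_ge0.
by apply: mulr_ge0; [apply: mulr_ge0; [exact: ler0n | exact: exprn_ge0] | exact: sqr_ge0].
Qed.

Lemma opt n (v b : R) : 0 <= b -> b <= v ->
  (v - b) * b ^+ n <= (v - n%:R / n.+1%:R * v) * (n%:R / n.+1%:R * v) ^+ n.
Proof.
move=> b0 bv.
have v0 : 0 <= v by apply: le_trans bv.
case: n => [|n].
  by rewrite !expr0 !mulr1 !mul0r subr0; lra.
set c := n.+1%:R / n.+2%:R * v.
have c0 : 0 <= c by rewrite /c; apply: mulr_ge0 => //; apply: divr_ge0; exact: ler0n.
have hNv : n.+1%:R * v = n.+2%:R * c.
  rewrite /c; field. by apply/eqP => h; have := ler0n R n; lra.
have K := @Kpos n.+1 b c b0 c0.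
have N0 : 0 < n.+1%:R :> R by rewrite ltr0n.
rewrite -(ler_pM2l N0).
have -> : n.+1%:R * ((v - b) * b ^+ n.+1) = (n.+1%:R * v) * b ^+ n.+1 - n.+1%:R * (b * b ^+ n.+1) by ring.
have -> : n.+1%:R * ((v - c) * c ^+ n.+1) = (n.+1%:R * v) * c ^+ n.+1 - n.+1%:R * (c * c ^+ n.+1) by ring.
rewrite hNv; rewrite !exprS in K *.
lra.
Qed.
End Helpers.

Theorem mainTheorem2 (R : realType) (nA : nat) (v : R) :
  0 <= v <= 1 ->
  let bstar := nA%:R / nA.+1%:R * v in
  [/\ (* bstar is an optimal bid (best response to truthful integrated bidders) *)
      (forall b : R, U_nonint nA v b <= U_nonint nA v bstar),
      (* equilibrium interim surplus of the non-integrated bidder *)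
      U_nonint nA v bstar = (nA%:R / nA.+1%:R) ^+ nA * (v ^+ nA.+1 / nA.+1%:R),
      (* interim surplus if it were integrated *)
      S_int nA v = v ^+ nA.+1 / nA.+1%:R &
      (* ratio *)
      U_nonint nA v bstar = (nA%:R / nA.+1%:R) ^+ nA * S_int nA v].
Proof.
move=> /andP[v0 v1] bstar.
have Uf b : U_nonint nA v b = if 0 <= b then (v - b) * Num.min b 1 ^+ nA else 0.
  exact: (@F1 R nA b (v - b)).
have c0 : 0 <= bstar.
  by rewrite /bstar; apply: mulr_ge0 => //; apply: divr_ge0; exact: ler0n.
have cv : bstar <= v.
  rewrite /bstar -[leRHS]mul1r; apply: ler_wpM2r => //.
  by rewrite ler_pdivrMr ?ltr0n // mul1r ler_nat.
have c1 : bstar <= 1 by apply: le_trans v1.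
have Uc' : U_nonint nA v bstar = (v - bstar) * bstar ^+ nA.
  by rewrite Uf c0 min_l.
have Uc : U_nonint nA v bstar = (nA%:R / nA.+1%:R) ^+ nA * (v ^+ nA.+1 / nA.+1%:R).
  rewrite Uc' /bstar exprMn exprS; field.
  by apply/eqP => h; have := ler0n R nA; lra.
have Si : S_int nA v = v ^+ nA.+1 / nA.+1%:R.
  rewrite /S_int (@unifE_ext R nA _ (fun s => int_utility v (0 :: s))).
    rewrite (@F2 R nA v _ 0) /Hf ?v0 ?expr0n ?subr0 //= ?lexx ?ler01 ?v1 //.
  by move=> s; rewrite /int_utility maxbid_cons max_r // maxbid_ge0.
split => //; last by rewrite Uc Si.
move=> b; rewrite Uc' Uf.
case: ifP => b0; last first.
  by apply: mulr_ge0; [rewrite subr_ge0 | exact: exprn_ge0].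
have [b1|b1] := leP 1 b.
  rewrite expr1n mulr1; apply: le_trans (_ : 0 <= _).
    by rewrite subr_le0 (le_trans v1 b1).
  by apply: mulr_ge0; [rewrite subr_ge0 | exact: exprn_ge0].
have [vb|bv] := leP v b.
  apply: le_trans (_ : 0 <= _).
    by rewrite mulr_le0_ge0 ?subr_le0 ?exprn_ge0.
  by apply: mulr_ge0; [rewrite subr_ge0 | exact: exprn_ge0].
exact: (@opt R nA v b b0 (ltW bv)).
Qed.
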